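(* If $a \geq 2$, then $I_{a,a} \geq \dfrac{r(r+1)}{2}$, where $r = P_a(2a-1)$.
   Context: $K_{a,a}$ is the complete bipartite graph with both partite sets of size $a$. $I_{a,a}$ denotes the number of isomorphism classes (as unlabeled graphs) of spanning trees of $K_{a,a}$. $P_k(m)$ denotes the number of integer partitions of $m$ into exactly $k$ positive parts. *)

(* Defs.v *)
From mathcomp Require Import all_boot fingroup perm.
Set Implicit Arguments. Unset Strict Implicit. Unset Printing Implicit Defensive.

(* Vertices of K_{a,a}: left part 'I_a (inl) and right part 'I_a (inr). *)
Definition Kvert (a : nat) : finType := ('I_a + 'I_a)%type.

(* A subgraph of K_{a,a} on all vertices is given by its edge set:
   (i, j) \in E means the edge between left vertex i and right vertex j. *)
Definition Kedges (a : nat) := {set 'I_a * 'I_a}.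

Definition Kadj (a : nat) (E : Kedges a) : rel (Kvert a) :=
  fun u v => match u, v with
             | inl i, inr j => (i, j) \in E
             | inr j, inl i => (i, j) \in E
             | _, _ => false
             end.

Definition Kconnected (a : nat) (E : Kedges a) : bool :=
  [forall u : Kvert a, forall v : Kvert a, connect (Kadj E) u v].

(* E contains a cycle: k >= 3 distinct vertices v_0, ..., v_{k-1} with v_i ~ v_{i+1}
   and v_{k-1} ~ v_0.  (k is bounded by #|V| automatically since the vertices are
   distinct.) *)
Definition Khas_cycle (a : nat) (E : Kedges a) : bool :=
  [exists k : 'I_(#|Kvert a|).+1,
     exists t : k.-tuple (Kvert a), [&& 2 < k, uniq t & path.cycle (Kadj E) t]].

Definition Kspanning_tree (a : nat) (E : Kedges a) : bool :=
  Kconnected E && ~~ Khas_cycle E.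

(* Isomorphism of the graphs (Kvert a, E1) and (Kvert a, E2) as unlabeled graphs:
   a bijection of the vertex set preserving adjacency (not necessarily the sides). *)
Definition Kiso (a : nat) (E1 E2 : Kedges a) : bool :=
  [exists p : {perm Kvert a},
     forall u : Kvert a, forall v : Kvert a, Kadj E1 u v == Kadj E2 (p u) (p v)].

Definition Iaa (a : nat) : nat :=
  #| [set [set E' in [set E'' : Kedges a | Kspanning_tree E''] | Kiso E E']
     | E in [set E'' : Kedges a | Kspanning_tree E''] ] |.

(* P_k(m): number of partitions of m into exactly k positive parts, counted as
   nondecreasing k-tuples of positive integers (each <= m) with sum m. *)
Definition Ppart (k m : nat) : nat :=
  #| [set t : k.-tuple 'I_m.+1 |
       let s := [seq val x | x <- t] in
       [&& sorted leq s, all (fun x => 0 < x) s & sumn s == m] ] |.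

(* Main.v *)
Require Import Defs.
From mathcomp Require Import all_boot fingroup perm.
Set Warnings "-notation-overridden".
Set Implicit Arguments. Unset Strict Implicit. Unset Printing Implicit Defensive.

Lemma card_ord_count n (f : nat -> bool) :
  #|[set j : 'I_n | f (val j)]| = count f (iota 0 n).
Proof.
rewrite cardsE cardE -val_enum_ord count_map.
rewrite /enum_mem size_filter /enum_mem. 
by rewrite (@eq_filter _ _ predT) ?filter_predT.
Qed.

Fixpoint G (c : nat) (x : seq nat) : seq nat :=
  if x is n :: x' then nseq n c ++ G c.+1 x' else [::].

Lemma size_G c x : size (G c x) = sumn x.
Proof. by elim: x c => //= n x IH c; rewrite size_cat size_nseq IH. Qed.

Lemma all_G c x : all (fun v => c <= v < c + size x) (G c x).
Proof.
elim: x c => //= n x IH c; rewrite all_cat; apply/andP; split.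
  by apply/allP => v /nseqP [-> _]; rewrite leqnn addnS ltnS leq_addr.
apply: sub_all (IH c.+1) => v /andP [h1 h2].
by rewrite ltnW //= -addSnnS.
Qed.

Lemma count_G c x i : count (pred1 (c + i)) (G c x) = nth 0 x i.
Proof.
elim: x c i => [|n x IH] c i /=; first by case: i.
rewrite count_cat count_nseq /=.
case: i => [|i].
  rewrite addn0 eqxx mul1n (eq_in_count (a2 := pred0)) ?count_pred0 ?addn0 //.
  move=> v /(allP (all_G c.+1 x)) /andP [h1 _] /=.
  by apply/negbTE; rewrite neq_ltn h1 orbT.
have -> : (c == c + i.+1) = false by rewrite -{1}(addn0 c) eqn_add2l.
by rewrite mul0n add0n -addSnnS IH.
Qed.

Lemma nth_G c x j : j < size (G c x) ->
  c <= nth 0 (G c x) j /\ sumn (take (nth 0 (G c x) j - c) x) <= j.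
Proof.
elim: x c j => [|n x IH] c j //=.
rewrite size_cat size_nseq nth_cat size_nseq => hj.
case: (ltnP j n) => hjn.
  by rewrite nth_nseq hjn subnn take0 leqnn.
have hj' : j - n < size (G c.+1 x) by rewrite ltn_subLR.
have [h1 h2] := IH c.+1 (j - n) hj'.
split; first exact: ltnW.
have -> : nth 0 (G c.+1 x) (j - n) - c = (nth 0 (G c.+1 x) (j - n) - c.+1).+1.
  by rewrite subnS prednK // subn_gt0.
by rewrite /= -(subnKC hjn) leq_add2l; move: h2; rewrite subnKC.
Qed.

Lemma prefix_sorted x : sorted geq x ->
  forall m, m <= sumn (take m x) \/ sumn (take m x) = sumn x.
Proof.
elim: x => [|h x IH] /= hs m; first by right.
case: m => [|m]; first by left.
have hx : sorted geq x := path_sorted hs.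
rewrite /=.
case: (IH hx m) => [hm|->]; last by right.
case: h hs => [|h] hs.
  right; rewrite !add0n.
  have tr : transitive geq by move=> p q r h1 h2; exact: leq_trans h2 h1.
  have := order_path_min tr hs.
  move=> hall.
  have hz : sumn x = 0.
    clear IH hx hm hs; elim: x hall => //= y x IHx /andP [hy hall].
    by rewrite IHx //; move: hy; rewrite /geq leqn0 => /eqP ->.
  have hz' : sumn (take m x) = 0.
    apply/eqP; rewrite -leqn0 -hz.
    by rewrite -{2}(cat_take_drop m x) sumn_cat leq_addr.
  by rewrite hz hz'.
by left; rewrite addSn ltnS (leq_trans hm) // leq_addl.
Qed.

Lemma G_bound x a : sorted geq x -> size x = a -> sumn x = a.-1 ->
  forall j, j < a.-1 -> nth 0 (G 0 x) j <= j.
Proof.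
move=> hs hsz hsum j hj.
have hj' : j < size (G 0 x) by rewrite size_G hsum.
have [_ h2] := nth_G hj'.
rewrite subn0 in h2.
case: (prefix_sorted hs (nth 0 (G 0 x) j)) => [h|h]; first exact: leq_trans h h2.
by move: h2; rewrite h hsum leqNgt hj.
Qed.

Lemma no_cycle (T : finType) (e : rel T) (rk : T -> nat) (par : T -> T) :
  symmetric e ->
  (forall u v, e u v -> rk u != rk v) ->
  (forall u v, e u v -> rk v < rk u -> v = par u) ->
  forall s : seq T, 2 < size s -> uniq s -> path.cycle e s -> False.
Proof.
move=> esym eneq epar s hsz hu hc.
case: s hsz hu hc => [|x0 s0] // hsz hu hc.
set s := x0 :: s0 in hsz hu hc.
have hx0 : x0 \in s by rewrite inE eqxx.
case: (@arg_maxnP T x0 (mem s) rk hx0) => u us umax.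
have := rot_index us.
set i := index u s => hrot.
have hc' : path.cycle e (rot i s) by rewrite rot_cycle.
have hu' : uniq (rot i s) by rewrite rot_uniq.
have hsz' : 2 < size (rot i s) by rewrite size_rot.
have hmem : forall v, v \in rot i s -> rk v <= rk u.
  by move=> v; rewrite mem_rot => /umax.
move: hc' hu' hsz' hmem; rewrite hrot.
case: (drop i.+1 s ++ take i s) => [|w l] //.
case: l => [|y l'] // hc2 hu2 _ hmem.
rewrite /= in hc2.
move: hc2 => /and3P [euw _]; rewrite rcons_path => /andP [_ ezu].
have hw : rk w < rk u.
  rewrite ltn_neqAle eq_sym (eneq _ _ euw) hmem //.
  by rewrite inE mem_head orbT.
have hz : rk (last y l') < rk u.
  rewrite ltn_neqAle (eneq _ _ ezu) hmem //.
  by have := mem_last y l'; rewrite !inE => ->; rewrite !orbT.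
have wp := epar _ _ euw hw.
have zp : last y l' = par u by apply: epar => //; rewrite esym.
move: hu2 => /= /andP [_ /andP [hwn _]].
by move: hwn; rewrite wp -zp; have := mem_last y l' ; move=> ->.
Qed.

Lemma all_connect (T : finType) (e : rel T) (rk : T -> nat) (par : T -> T) (r : T) :
  symmetric e ->
  (forall u, u != r -> e u (par u) && (rk (par u) < rk u)) ->
  forall u v, connect e u v.
Proof.
move=> esym hpar.
have toroot : forall k u, rk u < k -> connect e u r.
  elim=> [|k IH] u // hk.
  case: (eqVneq u r) => [->|hur]; first exact: connect0.
  have /andP [hup hrk] := hpar u hur.
  apply: connect_trans (connect1 hup) (IH _ _).
  by rewrite -ltnS (leq_trans _ hk).
move=> u v.
apply: connect_trans (toroot _ u (ltnSn _)) _.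
by rewrite (sym_connect_sym esym) (toroot _ v (ltnSn _)).
Qed.

Lemma Kadj_sym a (E : Kedges a) : symmetric (Kadj E).
Proof. by case=> x; case=> y. Qed.

Section Tree.
Variables (n : nat) (P Q : nat -> nat).
Hypothesis hP : forall j, j < n.+1 -> P j <= j.
Hypothesis hQ : forall i, 0 < i < n.+1 -> Q i < i.

Definition Tr : Kedges n.+1 :=
  [set ij : 'I_n.+1 * 'I_n.+1 | (P ij.2 == ij.1) || (0 < ij.1) && (Q ij.1 == ij.2)].

Definition rk (u : Kvert n.+1) : nat :=
  match u with inl i => (val i).*2 | inr j => (P j).*2.+1 end.
Definition par (u : Kvert n.+1) : Kvert n.+1 :=
  match u with inl i => inr (inord (Q i)) | inr j => inl (inord (P j)) end.

Lemma PQ i : 0 < i < n.+1 -> P (Q i) < i.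
Proof.
move=> hi; have hq := hQ hi.
apply: (leq_ltn_trans (hP _) hq).
by case/andP: hi => _ h; exact: ltn_trans hq h.
Qed.

Lemma Tr_neq u v : Kadj Tr u v -> rk u != rk v.
Proof.
case: u => x; case: v => y //= _.
  by apply/negP => /eqP /(congr1 odd); rewrite /= !odd_double.
by apply/negP => /eqP /(congr1 odd); rewrite /= !odd_double.
Qed.

Lemma Tr_par u v : Kadj Tr u v -> rk v < rk u -> v = par u.
Proof.
case: u => x; case: v => y //=; rewrite inE /=.
  case/orP => [/eqP hx|/andP [hx /eqP hq]]; first by rewrite hx ltnNge leqnSn.
  by move=> _; congr inr; apply: val_inj; rewrite /= inordK hq //.
case/orP => [/eqP hy0|/andP [hy /eqP hq]] hr.
  by congr inl; apply: val_inj; rewrite /= inordK hy0.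
exfalso; move: hr; rewrite -hq ltnNge => /negP; apply.
have := PQ (i := y); rewrite hy ltn_ord => /(_ isT) h.
by rewrite ltn_double.
Qed.

Lemma Tr_up u : u != inl ord0 -> Kadj Tr u (par u) && (rk (par u) < rk u).
Proof.
case: u => x /= hx.
  have hx0 : 0 < x.
    by rewrite lt0n; apply/negP => /eqP h; move: hx; rewrite (_ : x = ord0) ?eqxx //; apply: val_inj.
  have hq := hQ (i := x); rewrite hx0 ltn_ord in hq; have hq' := hq isT.
  have hqa : Q x < n.+1 by apply: ltn_trans hq' _.
  rewrite inE /= inordK // hx0 eqxx orbT /=.
  have := PQ (i := x); rewrite hx0 ltn_ord => /(_ isT) h.
  by move: h; rewrite -leq_double doubleS.
have hpa : P x < n.+1 by apply: leq_ltn_trans (hP (ltn_ord x)) _.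
by rewrite in_set /= inordK // eqxx /= ltnSn.
Qed.

Lemma Tr_tree : Kspanning_tree Tr.
Proof.
apply/andP; split.
  apply/forallP => u; apply/forallP => v.
  exact: (all_connect (rk := rk) (par := par) (r := inl ord0) (Kadj_sym Tr) Tr_up).
apply/negP => /existsP [k /existsP [t /and3P [hk hu hc]]].
apply: (no_cycle (Kadj_sym Tr) Tr_neq Tr_par (s := t)) => //.
by rewrite size_tuple.
Qed.

End Tree.

Definition dg a (E : Kedges a) (u : Kvert a) := #|[set v | Kadj E u v]|.

Lemma dg_inl a (E : Kedges a) i : dg E (inl i) = #|[set j | (i, j) \in E]|.
Proof.
rewrite /dg -(card_imset _ (@inr_inj 'I_a 'I_a)).
congr #|pred_of_set _|; apply/setP => v; rewrite inE.
case: v => [v|v] /=.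
  by apply/esym/imsetP => [[w _]].
apply/idP/imsetP => [h|[w hw [->]]]; first by exists v; rewrite ?inE.
by rewrite inE in hw.
Qed.

Lemma dg_inr a (E : Kedges a) j : dg E (inr j) = #|[set i | (i, j) \in E]|.
Proof.
rewrite /dg -(card_imset _ (@inl_inj 'I_a 'I_a)).
congr #|pred_of_set _|; apply/setP => v; rewrite inE.
case: v => [v|v] /=.
  apply/idP/imsetP => [h|[w hw [->]]]; first by exists v; rewrite ?inE.
  by rewrite inE in hw.
by apply/esym/imsetP => [[w _]].
Qed.

Lemma count_nth (w : seq nat) (f : nat -> bool) :
  count (fun j => f (nth 0 w j)) (iota 0 (size w)) = count f w.
Proof. by rewrite -[in RHS](take_size w) -(map_nth_iota0 0) // count_map. Qed.

Lemma count_iota_eq q n : count (fun j => q == j) (iota 0 n) = (q < n).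
Proof.
rewrite (eq_count (a2 := pred1 q)); last by move=> j; rewrite /= eq_sym.
by rewrite count_uniq_mem ?iota_uniq // mem_iota.
Qed.

Lemma count_or (T : Type) (a b : pred T) s :
  (forall x, a x -> b x -> False) ->
  count (fun x => a x || b x) s = count a s + count b s.
Proof.
move=> h; elim: s => //= x s ->.
case ha: (a x); case hb: (b x) => //=; first by case: (h x ha hb).
all: rewrite ?add0n ?addn0 ?addnA ?addSn ?addnS //.
by rewrite add0n addn0 addSn.
Qed.

Section TreeDeg.
Variables (n : nat) (P Q : nat -> nat).
Hypothesis hP : forall j, j < n.+1 -> P j <= j.
Hypothesis hQ : forall i, 0 < i < n.+1 -> Q i < i.

Lemma dgL (i : 'I_n.+1) :
  dg (Tr n P Q) (inl i) = count (fun j => P j == i) (iota 0 n.+1) + (0 < i).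
Proof.
rewrite dg_inl.
have -> : #|[set j | (i, j) \in Tr n P Q]| =
   count (fun j => (P j == i) || (0 < i) && (Q i == j)) (iota 0 n.+1).
  by rewrite -card_ord_count; apply: eq_card => j; rewrite !inE.
rewrite (count_or (a := fun j => P j == i) (b := fun j => (0 < i) && (Q i == j))); last first.
  move=> j /= /eqP hj /andP [hi /eqP hq].
  have := PQ hP hQ (i := i); rewrite hi ltn_ord hq hj ltnn.
  by move/(_ isT).
congr (_ + _).
case: (posnP i) => [->|hi].
  by rewrite (eq_count (a2 := pred0)) ?count_pred0.
rewrite (eq_count (a2 := fun j => Q i == j)) ?count_iota_eq; last by move=> j /=; rewrite ?hi.
by rewrite (ltn_trans (hQ _)) // hi ltn_ord.
Qed.

Lemma dgR (j : 'I_n.+1) :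
  dg (Tr n P Q) (inr j) = 1 + count (fun i => (0 < i) && (Q i == j)) (iota 0 n.+1).
Proof.
rewrite dg_inr.
have -> : #|[set i | (i, j) \in Tr n P Q]| =
   count (fun i => (P j == i) || (0 < i) && (Q i == j)) (iota 0 n.+1).
  by rewrite -card_ord_count; apply: eq_card => i; rewrite !inE.
rewrite (count_or (a := fun i => P j == i) (b := fun i => (0 < i) && (Q i == j))); last first.
  move=> i /= /eqP hj /andP [hi /eqP hq].
  have hin : i < n.+1 by rewrite -hj (leq_ltn_trans (hP (ltn_ord j))).
  have := PQ hP hQ (i := i); rewrite hi hin hq hj ltnn.
  by move/(_ isT).
by rewrite count_iota_eq (leq_ltn_trans (hP (ltn_ord j))).
Qed.

End TreeDeg.

Definition PP (x : seq nat) := nth 0 (0 :: G 0 x).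

Section Spec.
Variables (n : nat) (x y : seq nat).
Hypotheses (sx : sorted geq x) (zx : size x = n.+1) (mx : sumn x = n).
Hypotheses (sy : sorted geq y) (zy : size y = n.+1) (my : sumn y = n).

Lemma PP_le (w : seq nat) : sorted geq w -> size w = n.+1 -> sumn w = n ->
  forall j, j < n.+1 -> PP w j <= j.
Proof.
move=> sw zw mw [|j] hj //=.
apply: leq_trans (G_bound sw zw mw _) _ => //.
Qed.

Lemma PP_lt (w : seq nat) : sorted geq w -> size w = n.+1 -> sumn w = n ->
  forall i, 0 < i < n.+1 -> PP w i < i.
Proof.
move=> sw zw mw [|i] hi //=.
by rewrite ltnS (G_bound sw zw mw).
Qed.

Lemma size_PPl (w : seq nat) : sumn w = n -> size (0 :: G 0 w) = n.+1.
Proof. by move=> mw; rewrite /= size_G mw. Qed.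

Definition TT := Tr n (PP x) (PP y).

Lemma TT_tree : Kspanning_tree TT.
Proof. by apply: Tr_tree; [apply: PP_le | apply: PP_lt]. Qed.

Lemma dgTL (i : 'I_n.+1) : dg TT (inl i) = (nth 0 x i).+1.
Proof.
rewrite /TT (dgL (PP_le sx zx mx) (PP_lt sy zy my)).
have -> : iota 0 n.+1 = iota 0 (size (0 :: G 0 x)) by rewrite size_PPl.
rewrite (count_nth (0 :: G 0 x) (fun v => v == i)).
rewrite /= -(add0n (val i)) (count_G 0 x i) add0n.
by case: i => [[|k] hk] /=; rewrite ?addn0 ?addn1 ?add0n.
Qed.

Lemma dgTR (j : 'I_n.+1) : dg TT (inr j) = (nth 0 y j).+1.
Proof.
rewrite /TT (dgR (PP_le sx zx mx) (PP_lt sy zy my)) add1n; congr S.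
rewrite /= add0n (iotaDl 1 0 n) count_map.
rewrite (eq_count (a2 := fun k => nth 0 (G 0 y) k == j)); last by [].
have -> : iota 0 n = iota 0 (size (G 0 y)) by rewrite size_G my.
rewrite (count_nth (G 0 y) (fun v => v == j)).
by rewrite -(add0n (val j)) -(count_G 0 y j).
Qed.

End Spec.

Definition LD a (E : Kedges a) := [seq dg E (inl i) | i <- enum 'I_a].
Definition RD a (E : Kedges a) := [seq dg E (inr i) | i <- enum 'I_a].

Lemma LD_TT n x y (sx : sorted geq x) (zx : size x = n.+1) (mx : sumn x = n)
  (sy : sorted geq y) (zy : size y = n.+1) (my : sumn y = n) :
  LD (TT n x y) = map S x.
Proof.
rewrite /LD (eq_map (dgTL sx zx mx sy zy my)).
rewrite (map_comp (fun k => (nth 0 x k).+1) val) val_enum_ord -zx.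
by rewrite (map_comp S (nth 0 x)) (map_nth_iota0 0) // take_size.
Qed.

Lemma RD_TT n x y (sx : sorted geq x) (zx : size x = n.+1) (mx : sumn x = n)
  (sy : sorted geq y) (zy : size y = n.+1) (my : sumn y = n) :
  RD (TT n x y) = map S y.
Proof.
rewrite /RD (eq_map (dgTR sx zx mx sy zy my)).
rewrite (map_comp (fun k => (nth 0 y k).+1) val) val_enum_ord -zy.
by rewrite (map_comp S (nth 0 y)) (map_nth_iota0 0) // take_size.
Qed.

Lemma perm_inj_map a (g1 g2 : 'I_a -> nat) (h : 'I_a -> 'I_a) :
  injective h -> (forall i, g1 i = g2 (h i)) ->
  perm_eq [seq g1 i | i <- enum 'I_a] [seq g2 i | i <- enum 'I_a].
Proof.
move=> hinj hg.
rewrite (eq_map hg) (map_comp g2 h); apply: perm_map.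
apply: uniq_perm; rewrite ?(map_inj_uniq hinj) ?enum_uniq //.
move=> z; rewrite mem_enum.
have := inj_card_onto hinj (leqnn _) z.
by rewrite codomE => ->.
Qed.

Lemma dg_iso a (E1 E2 : Kedges a) (p : {perm Kvert a}) :
  (forall u v, Kadj E1 u v = Kadj E2 (p u) (p v)) ->
  forall u, dg E1 u = dg E2 (p u).
Proof.
move=> hp u; rewrite /dg -(card_imset _ (@perm_inj _ p)).
congr #|pred_of_set _|; apply/setP => w; rewrite inE.
apply/imsetP/idP => [[v hv ->]|h].
  by rewrite -hp; rewrite inE in hv.
by exists (p^-1 w)%g; rewrite ?inE ?permKV // hp permKV.
Qed.

Definition sd a (u : Kvert a) := if u is inl _ then true else false.

Lemma Kadj_sd a (E : Kedges a) u v : Kadj E u v -> sd u = ~~ sd v.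
Proof. by case: u; case: v. Qed.

Definition getv a (u : Kvert a) := match u with inl j => j | inr j => j end.

Lemma iso_inv n (E1 E2 : Kedges n.+1) : Kconnected E1 -> Kiso E1 E2 ->
  (perm_eq (LD E1) (LD E2) /\ perm_eq (RD E1) (RD E2)) \/
  (perm_eq (LD E1) (RD E2) /\ perm_eq (RD E1) (LD E2)).
Proof.
move=> hc /existsP [p /forallP H].
have hp : forall u v, Kadj E1 u v = Kadj E2 (p u) (p v).
  by move=> u v; apply/eqP; move/forallP: (H u); apply.
pose f := [pred u | sd (p u) == sd u].
have cl : closed (Kadj E1) f.
  move=> u v huv; rewrite !inE (Kadj_sd huv).
  have := huv; rewrite hp => /Kadj_sd ->.
  by case: (sd (p v)); case: (sd v).
have hf : forall u, f u = f (inl ord0).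
  move=> u; apply: (closed_connect cl).
  by move/forallP: hc => /(_ u) /forallP; apply.
have key : forall (F Gt : 'I_n.+1 -> Kvert n.+1), injective F -> injective Gt ->
   (forall i, p (F i) = Gt (getv (p (F i)))) ->
   perm_eq [seq dg E1 (F i) | i <- enum 'I_n.+1] [seq dg E2 (Gt i) | i <- enum 'I_n.+1].
  move=> F Gt iF iG hG.
  apply: (perm_inj_map (h := fun i => getv (p (F i)))).
    move=> i j /= hij.
    by apply: iF; apply: (@perm_inj _ p); rewrite hG hij -hG.
  by move=> i; rewrite (dg_iso hp) {1}hG.
case hf0 : (f (inl ord0)).
  left; split.
    apply: key; try exact: inl_inj; move=> i.
    have := hf (inl i); rewrite hf0 inE /=.
    by case: (p (inl i)).
  apply: key; try exact: inr_inj; move=> i.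
  have := hf (inr i); rewrite hf0 inE /=.
  by case: (p (inr i)).
right; split.
  apply: key; try exact: inl_inj; try exact: inr_inj; move=> i.
  have := hf (inl i); rewrite hf0 inE /=.
  by case: (p (inl i)).
apply: key; try exact: inl_inj; try exact: inr_inj; move=> i.
have := hf (inr i); rewrite hf0 inE /=.
by case: (p (inr i)).
Qed.

Lemma card_le_pairs r :
  #|[set ij : 'I_r * 'I_r | ij.1 <= ij.2]| = r * (r + 1) %/ 2.
Proof.
set A := [set ij : 'I_r * 'I_r | ij.1 <= ij.2].
set B := [set ij : 'I_r * 'I_r | ij.2 <= ij.1].
have hU : A :|: B = setT.
  apply/setP => ij; rewrite !inE; exact: leq_total.
have hI : A :&: B = [set (i, i) | i : 'I_r].
  apply/setP => [[i j]]; rewrite !inE /=.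
  apply/idP/imsetP => [h|[k _ [-> ->]]]; last by rewrite leqnn.
  exists i => //; congr pair; apply: val_inj; apply/eqP; rewrite eqn_leq.
  by case/andP: h => -> ->.
have hB : B = [set (ij.2, ij.1) | ij in A].
  apply/setP => [[i j]]; rewrite !inE /=.
  apply/idP/imsetP => [h|[[k l] hkl [-> ->]]].
    by exists (j, i); rewrite ?inE.
  by rewrite inE in hkl.
have hBc : #|B| = #|A|.
  rewrite hB card_imset // => [[i j] [k l]] /= [-> ->] //.
have := cardsUI A B.
rewrite hU hI cardsT card_imset; last by move=> i j [].
rewrite card_prod card_ord hBc addnn -muln2 => h.
by rewrite mulnDr muln1 h mulnK.
Qed.

Lemma Kiso_refl a (E : Kedges a) : Kiso E E.
Proof.
apply/existsP; exists 1%g; apply/forallP => u; apply/forallP => v.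
by rewrite !perm1.
Qed.

Lemma sumn_pred (s : seq nat) : all (fun x => 0 < x) s ->
  sumn (map predn s) + size s = sumn s.
Proof.
elim: s => //= v s IH /andP [hv hs].
by rewrite addnS -addnA IH // -addSn prednK.
Qed.

Section Parts.
Variable n : nat.
Definition PS := [set t : n.+1.-tuple 'I_(2 * n.+1 - 1).+1 |
       let s := [seq val x | x <- t] in
       [&& sorted leq s, all (fun x => 0 < x) s & sumn s == 2 * n.+1 - 1] ].

Definition lst (t : n.+1.-tuple 'I_(2 * n.+1 - 1).+1) : seq nat := [seq val x | x <- t].
Definition xs t := map predn (rev (lst t)).

Section OneT.
Variable t : n.+1.-tuple 'I_(2 * n.+1 - 1).+1.
Hypothesis ht : t \in PS.

Lemma ht3 : [&& sorted leq (lst t), all (fun x => 0 < x) (lst t) & sumn (lst t) == 2 * n.+1 - 1].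
Proof. by move: ht; rewrite inE. Qed.

Lemma xs_sorted : sorted geq (xs t).
Proof.
case/and3P: ht3 => hs _ _.
rewrite /xs sorted_map; apply: (@sub_sorted _ geq).
  by move=> u v; rewrite /= -!subn1 => h; apply: leq_sub2r.
by rewrite rev_sorted.
Qed.

Lemma xs_size : size (xs t) = n.+1.
Proof. by rewrite /xs size_map size_rev /lst size_map size_tuple. Qed.

Lemma xs_sum : sumn (xs t) = n.
Proof.
case/and3P: ht3 => _ hp /eqP hs.
have := sumn_pred (s := rev (lst t)); rewrite all_rev => /(_ hp).
rewrite sumn_rev hs size_rev /lst size_map size_tuple -/(xs t) => h.
apply/eqP; rewrite -(eqn_add2r n.+1) h.
by rewrite mul2n -addnn addSn subn1.
Qed.

Lemma xs_S : map S (xs t) = rev (lst t).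
Proof.
case/and3P: ht3 => _ hp _.
rewrite /xs -map_comp map_id_in // => v; rewrite mem_rev => hv /=.
by rewrite prednK //; apply: (allP hp).
Qed.
End OneT.

Definition Tp t u := TT n (xs t) (xs u).

Lemma Tp_tree t u : t \in PS -> u \in PS -> Kspanning_tree (Tp t u).
Proof.
move=> ht hu; apply: TT_tree.
all: by rewrite ?xs_sorted ?xs_size ?xs_sum.
Qed.

Lemma LD_Tp t u : t \in PS -> u \in PS -> perm_eq (LD (Tp t u)) (lst t).
Proof.
move=> ht hu; rewrite /Tp (LD_TT (@xs_sorted t ht) (xs_size t) (@xs_sum t ht)
   (@xs_sorted u hu) (xs_size u) (@xs_sum u hu)).
by rewrite xs_S // perm_rev.
Qed.

Lemma RD_Tp t u : t \in PS -> u \in PS -> perm_eq (RD (Tp t u)) (lst u).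
Proof.
move=> ht hu; rewrite /Tp (RD_TT (@xs_sorted t ht) (xs_size t) (@xs_sum t ht)
   (@xs_sorted u hu) (xs_size u) (@xs_sum u hu)).
by rewrite xs_S // perm_rev.
Qed.

Lemma lst_inj t t' : t \in PS -> t' \in PS -> perm_eq (lst t) (lst t') -> t = t'.
Proof.
move=> ht ht' hp.
case/and3P: (@ht3 t ht) => s1 _ _; case/and3P: (@ht3 t' ht') => s2 _ _.
have := sorted_eq leq_trans anti_leq s1 s2 hp.
by rewrite /lst => /(inj_map val_inj) /val_inj.
Qed.

Lemma pe3 (X Y A B : seq nat) : perm_eq A X -> perm_eq A B -> perm_eq B Y -> perm_eq X Y.
Proof.
move=> h1 h2 h3; rewrite perm_sym in h1.
exact: perm_trans (perm_trans h1 h2) h3.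
Qed.

Lemma iso_Tp t u t' u' : t \in PS -> u \in PS -> t' \in PS -> u' \in PS ->
  Kiso (Tp t u) (Tp t' u') -> (t = t' /\ u = u') \/ (t = u' /\ u = t').
Proof.
move=> ht hu ht' hu' hiso.
have hc : Kconnected (Tp t u) by case/andP: (Tp_tree ht hu).
case: (iso_inv hc hiso) => [[h1 h2]|[h1 h2]].
  left; split; apply: lst_inj => //.
    exact: pe3 (LD_Tp ht hu) h1 (LD_Tp ht' hu').
  exact: pe3 (RD_Tp ht hu) h2 (RD_Tp ht' hu').
right; split; apply: lst_inj => //.
  exact: pe3 (LD_Tp ht hu) h1 (RD_Tp ht' hu').
exact: pe3 (RD_Tp ht hu) h2 (LD_Tp ht' hu').
Qed.

End Parts.

Unset Implicit Arguments.

Theorem theorem2p4 (a : nat) :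
  2 <= a ->
  let r := Ppart a (2 * a - 1) in
  r * (r + 1) %/ 2 <= Iaa a.
Proof.
case: a => [|n]; first by [].
move=> _; rewrite [in X in is_true X]/=.
set r := Ppart n.+1 (2 * n.+1 - 1).
rewrite -card_le_pairs.
set STs := [set E'' : Kedges n.+1 | Kspanning_tree E''].
pose ev (i : 'I_r) : n.+1.-tuple 'I_(2 * n.+1 - 1).+1 := @enum_val _ (mem (PS n)) i.
have evP : forall i, ev i \in PS n by move=> i; exact: (@enum_valP _ (mem (PS n)) i).
have evI : injective ev by move=> i j; apply: enum_val_inj.
pose M (ij : 'I_r * 'I_r) := [set E' in STs | Kiso (Tp (ev ij.1) (ev ij.2)) E'].
set PPs := [set ij : 'I_r * 'I_r | ij.1 <= ij.2].
have Minj : {in PPs &, injective M}.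
  move=> [i j] [k l]; rewrite !inE /= => hij hkl hM.
  have : Tp (ev k) (ev l) \in M (k, l).
    by rewrite !inE Tp_tree ?evP ?Kiso_refl.
  rewrite -hM inE => /andP [_ hiso].
  case: (iso_Tp (evP i) (evP j) (evP k) (evP l) hiso) => [[/evI e1 /evI e2]|[/evI e1 /evI e2]].
    by rewrite e1 e2.
  subst i j.
  have e : k = l by apply: val_inj; apply/eqP; rewrite eqn_leq hij hkl.
  by rewrite e.
rewrite -(card_in_imset Minj).
apply: subset_leq_card; apply/subsetP => C /imsetP [ij _ ->].
apply/imsetP; exists (Tp (ev ij.1) (ev ij.2)) => //.
by rewrite inE Tp_tree ?evP.
Qed.
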